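(* Let $G$ be a simple cubic graph on vertex set $[n]$ with girth at least $16$, let $A$ be a MAI set of $G$, and let $B=V(G)\setminus A$. Then $B$ is an AI set, i.e. every vertex of $B$ has at most one neighbour in $B$.
   Context: A vertex set $A$ of a graph $G$ is an AI set (almost independent set) if $\Delta(G[A])\le 1$, i.e. every component of the induced subgraph $G[A]$ is a single vertex or a single edge. A vertex set $A$ is a MAI set (maximum almost independent set) of $G$ if (M1) $A$ is an AI set, (M2) $A$ contains an independent set of size $\alpha(G)$, and (M3) $A$ has maximum cardinality among all vertex sets satisfying (M1) and (M2). *)

(* Defs.v *)
From mathcomp Require Import all_boot.
Set Implicit Arguments. Unset Strict Implicit. Unset Printing Implicit Defensive.

Definition simple_graph (T : finType) (e : rel T) : Prop :=
  symmetric e /\ irreflexive e.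

Definition nbhd (T : finType) (e : rel T) (x : T) : {set T} := [set y | e x y].
Definition cubic (T : finType) (e : rel T) : Prop := forall x, #|nbhd e x| = 3.

Definition girth_at_least (T : finType) (e : rel T) (g : nat) : Prop :=
  forall s : seq T, uniq s -> 3 <= size s -> path.cycle e s -> g <= size s.

Definition independent (T : finType) (e : rel T) (I : {set T}) : Prop :=
  forall x y, x \in I -> y \in I -> ~~ e x y.

Definition independentb (T : finType) (e : rel T) (I : {set T}) : bool :=
  [forall x in I, forall y in I, ~~ e x y].

Definition alpha (T : finType) (e : rel T) : nat :=
  \max_(I : {set T} | independentb e I) #|I|.

Definition AI_set (T : finType) (e : rel T) (A : {set T}) : Prop :=
  forall x, x \in A -> #|A :&: nbhd e x| <= 1.

Definition contains_max_indep (T : finType) (e : rel T) (A : {set T}) : Prop :=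
  exists I : {set T}, [/\ I \subset A, independent e I & #|I| = alpha e].

Definition MAI_set (T : finType) (e : rel T) (A : {set T}) : Prop :=
  [/\ AI_set e A, contains_max_indep e A &
      forall A' : {set T}, AI_set e A' -> contains_max_indep e A' -> #|A'| <= #|A|].

(* Main.v *)
Require Import Defs.
From mathcomp Require Import all_boot.

Lemma indep_le (T : finType) (e : rel T) (J : {set T}) :
  independent e J -> #|J| <= alpha e.
Proof.
move=> HJ; rewrite /alpha.
apply: (@leq_bigmax_cond _ (fun I => independentb e I) (fun I : {set T} => #|I|) J).
apply/forallP=> x; apply/implyP=> hx; apply/forallP=> y; apply/implyP=> hy.
exact: HJ.
Qed.

Lemma card_le1 (T : finType) (S : {set T}) (c : T) : S \subset [set c] -> #|S| <= 1.
Proof. by move=> /subset_leq_card; rewrite cards1. Qed.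

Theorem lemma6 (n : nat) (e : rel 'I_n) (A : {set 'I_n}) :
  simple_graph e -> cubic e -> girth_at_least e 16 -> MAI_set e A ->
  AI_set e (~: A).
Proof.
move=> [Hsym Hirr] Hcub _ [HA [I [HIA HI HIc]] Hmax] v.
rewrite in_setC => HvA.
rewrite leqNgt; apply/negP => H2.
have HvI : v \notin I by apply: contraNN HvA => /(subsetP HIA).
have [x xI evx] : exists2 x, x \in I & e v x.
  case: (boolP [exists x in I, e v x]) => [/existsP [x /andP [? ?]]|Hno]; first by exists x.
  exfalso; move/existsPn: Hno => Hno.
  have : #|v |: I| <= alpha e.
    apply: indep_le => a b; rewrite !in_setU1.
    case/predU1P=> [->|aI]; case/predU1P=> [->|bI].
    - by rewrite Hirr.
    - by have := Hno b; rewrite bI.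
    - by rewrite Hsym; have := Hno a; rewrite aI.
    - exact: HI.
  by rewrite cardsU1 HvI HIc add1n ltnn.
have xA : x \in A by apply: (subsetP HIA).
have HAv : A :&: nbhd e v = [set x].
  have hc : #|A :&: nbhd e v| <= 1.
    have := cardsID A (nbhd e v); rewrite Hcub setDE setIC (setIC _ (~: A)).
    move=> h; rewrite -(leq_add2r #|~: A :&: nbhd e v|) h.
    by rewrite add1n.
  apply/esym/eqP; rewrite eqEcard sub1set !inE xA evx cards1 /=.
  by rewrite hc.
have inAv t : t \in A -> e v t -> t = x.
  by move=> tA evt; apply/set1P; rewrite -HAv !inE tA evt.
case: (boolP [exists y in A, e x y]).
- move/existsP => [y /andP [yA exy]].
  have yI : y \notin I by apply/negP => yI; have := HI x y xI yI; rewrite exy.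
  have yx : y != x by apply/negP => /eqP yx; move: exy; rewrite yx Hirr.
  have inAy t : t \in A -> e y t -> t = x.
    move=> tA eyt; have hc := HA y yA.
    have HAy : A :&: nbhd e y = [set x].
      apply/esym/eqP; rewrite eqEcard sub1set !inE xA Hsym exy cards1 /=; exact: hc.
    by apply/set1P; rewrite -HAy !inE tA eyt.
  have vy : v != y by apply/negP => /eqP vy; move: HvA; rewrite vy yA.
  have key a b : a \in v |: (y |: (I :\ x)) -> b \in v |: (y |: (I :\ x)) ->
      (a = v \/ a = y) -> e a b -> False.
    rewrite !in_setU1 !in_setD1 => _ hb [->|->] hab.
    + case/predU1P: hb hab => [->|]; first by rewrite Hirr.
      case/predU1P => [->|/andP [bx bI]] h.
      * by move: yx; rewrite (inAv y yA h) eqxx.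
      * by move: bx; rewrite (inAv b (subsetP HIA b bI) h) eqxx.
    + case/predU1P: hb hab => [->|]; first by rewrite Hsym => h; move: yx; rewrite (inAv y yA h) eqxx.
      case/predU1P => [->|/andP [bx bI]] h; first by move: h; rewrite Hirr.
      by move: bx; rewrite (inAy b (subsetP HIA b bI) h) eqxx.
  have : #|v |: (y |: (I :\ x))| <= alpha e.
    apply: indep_le => a b ha hb; apply/negP => hab.
    case: (a =P v) => [av|nav]; first by apply: (key a b ha hb (or_introl av) hab).
    case: (a =P y) => [ay|nay]; first by apply: (key a b ha hb (or_intror ay) hab).
    case: (b =P v) => [bv|nbv]; first by rewrite Hsym in hab; apply: (key b a hb ha (or_introl bv) hab).
    case: (b =P y) => [bv|nby]; first by rewrite Hsym in hab; apply: (key b a hb ha (or_intror bv) hab).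
    move: ha hb; rewrite !in_setU1 !in_setD1.
    move=> /predU1P [av|/predU1P [ay|/andP [_ aI]]]; [by []|by []|].
    move=> /predU1P [bv|/predU1P [bya|/andP [_ bI]]]; [by []|by []|].
    by move: (HI a b aI bI); rewrite hab.
  rewrite cardsU1 !in_setU1 !in_setD1 (negbTE vy) (negbTE HvI) andbF /=.
  rewrite cardsU1 in_setD1 (negbTE yI) andbF /=.
  by rewrite -HIc (cardsD1 x I) xI add1n ltnn.
- move/existsPn => Hno.
  have HAI : AI_set e (v |: A).
    move=> z; rewrite in_setU1; case/predU1P=> [->|zA].
    + apply: (@card_le1 _ _ x); apply/subsetP => t; rewrite !inE.
      case/andP => /predU1P [->|tA] evt; first by move: evt; rewrite Hirr.
      by rewrite (inAv t tA evt).
    + case: (z =P x) => [->|zx].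
      * apply: (@card_le1 _ _ v); apply/subsetP => t; rewrite !inE.
        case/andP => /predU1P [->|tA] ext //.
        by have := Hno t; rewrite tA ext.
      * apply: leq_trans (HA z zA); apply: subset_leq_card.
        apply/subsetP => t; rewrite !inE.
        case/andP => /predU1P [->|tA] ezt; last by rewrite tA ezt.
        by exfalso; apply: zx; apply: inAv => //; rewrite Hsym.
  have HM : contains_max_indep e (v |: A).
    exists I; split => //; apply: subset_trans HIA _; exact: subsetUr.
  by have := Hmax _ HAI HM; rewrite cardsU1 HvA add1n ltnn.
Qed.
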